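(* Let $n$ be an odd integer with prime factorisation $n=p_{1}^{J_{1}}p_{2}^{J_{2}}\cdots p_{s}^{J_{s}}$, where $s\geq 2$, $p_1,\dots,p_s$ are distinct primes, $J_i\ge 1$, and for every $r\in\{1,\dots,s-1\}$ we have $\prod_{i=1}^{r}p_{i}^{J_{i}}<p_{r+1}$. Let $\mathcal{D}_{S_{1}},\mathcal{D}_{S_{2}}$ be subsets of $\mathcal{D}_{[n]}\setminus\{n\}$. If $\mathrm{Spec}(\mathrm{ICG}(n,\mathcal{D}_{S_{1}}))=\mathrm{Spec}(\mathrm{ICG}(n,\mathcal{D}_{S_{2}}))$, then $\mathcal{D}_{S_{1}}=\mathcal{D}_{S_{2}}$ (equivalently $S_1=S_2$).
   Context: For an integer $n\ge1$, identify $\mathbb{Z}_n$ with $[n]=\{1,\dots,n\}$ ($n$ playing the role of $0$). For a positive divisor $d$ of $n$, $G_n(d)=\{j\in[n]:\gcd(j,n)=d\}$. $\mathcal{D}_{[n]}$ denotes the set of all positive divisors of $n$. For $\mathcal{D}\subseteq\mathcal{D}_{[n]}\setminus\{n\}$, $\mathrm{ICG}(n,\mathcal{D})$ denotes the circulant graph $\mathrm{Cay}(\mathbb{Z}_n,S)$ with connection set $S=\bigcup_{d\in\mathcal{D}}G_n(d)$ (vertex set $\mathbb{Z}_n$, $g\sim h$ iff $h-g\in S$); we write $\mathcal{D}=\mathcal{D}_S$. These are exactly the integral circulant graphs on $\mathbb{Z}_n$. $\mathrm{Spec}$ denotes the multiset of eigenvalues of the adjacency matrix. *)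

(* Defs.v *)
From HB Require Import structures.
From mathcomp Require Import all_boot all_order all_algebra all_field.
From mathcomp Require Import finmap.
Set Implicit Arguments. Unset Strict Implicit. Unset Printing Implicit Defensive.
Import GRing.Theory Num.Theory.
Open Scope fset_scope.
From mathcomp Require Import algC.

(* Vertices of Z_n are represented by 'I_n (the residue 0 plays the role of n).
   For D a finite set of divisors of n, ICG(n,D) = Cay(Z_n, S) with
   S = \bigcup_{d in D} G_n(d) = { j in [n] : gcd(j,n) \in D }.
   g ~ h iff (h - g mod n) \in S, i.e. gcd((h - g) mod n, n) \in D
   (for h = g the residue is 0, representing n, and gcdn 0 n = n). *)
Definition ICG_adj (n : nat) (D : {fset nat}) (g h : 'I_n) : bool :=
  gcdn ((h + n - g) %% n) n \in D.

Definition ICG_adjmx (n : nat) (D : {fset nat}) : 'M[algC]_n :=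
  \matrix_(i, j) (if @ICG_adj n D i j then 1 else 0)%R.

Definition Spec (n : nat) (A : 'M[algC]_n) : algC -> nat :=
  fun lambda => mup lambda (char_poly A).

(* Main.v *)
Require Import Defs.
From HB Require Import structures.
From mathcomp Require Import all_boot all_order all_algebra all_field.
From mathcomp Require Import finmap.
From mathcomp Require Import cyclic zify.
Open Scope fset_scope.

Section Helpers.
Import Order.TTheory GRing.Theory Num.Theory.
Local Open Scope nat_scope.

Lemma tot_pow_sum p k : prime p -> \sum_(a < k.+1) totient (p ^ a) = p ^ k.
Proof.
move=> pp; elim: k => [|k IH]; first by rewrite big_ord_recr big_ord0.
rewrite big_ord_recr /= IH totient_pfactor // expnS.
by rewrite -{1}(mul1n (p ^ k)) -mulnDl add1n prednK // prime_gt0.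
Qed.

Lemma radix_bound p Q k (T : nat -> nat) : prime p -> Q < p.-1 ->
  (forall a, a < k -> T a <= Q) ->
  \sum_(a < k) totient (p ^ a) * T a < totient (p ^ k).
Proof.
move=> pp hQ hT.
apply: (@leq_ltn_trans (\sum_(a < k) totient (p ^ a) * Q)).
  by apply: leq_sum => a _; rewrite leq_mul2l hT ?orbT.
rewrite -big_distrl /=.
case: k hT => [|k] hT; first by rewrite big_ord0 /= expn0.
rewrite tot_pow_sum // totient_pfactor //= mulnC ltn_pmul2r //.
by rewrite expn_gt0 prime_gt0.
Qed.

Lemma radix p Q k (T1 T2 : nat -> nat) : prime p -> Q < p.-1 ->
  (forall a, a < k -> T1 a <= Q) -> (forall a, a < k -> T2 a <= Q) ->
  \sum_(a < k) totient (p ^ a) * T1 a = \sum_(a < k) totient (p ^ a) * T2 a ->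
  forall a, a < k -> T1 a = T2 a.
Proof.
move=> pp hQ; elim: k => [|k IH] h1 h2 heq a; first by [].
rewrite !big_ord_recr /= in heq.
have b1 := @radix_bound p Q k T1 pp hQ (fun a ha => h1 a (ltnW ha)).
have b2 := @radix_bound p Q k T2 pp hQ (fun a ha => h2 a (ltnW ha)).
set w := totient (p ^ k) in b1 b2 heq.
set X1 := \sum_(i < k) _ in b1 heq; set X2 := \sum_(i < k) _ in b2 heq.
have w0 : 0 < w by apply: leq_ltn_trans b1.
have eT : T1 k = T2 k.
  have := congr1 (fun x => x %/ w) heq => /=.
  by rewrite ![w * _]mulnC !divnDMl // !divn_small // !add0n.
rewrite eT in heq; have eX : X1 = X2 by apply/eqP; rewrite -(eqn_add2r (w * T2 k)) heq.
rewrite ltnS leq_eqVlt => /orP[/eqP -> //|ha].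
apply: IH => //; [move=> b hb; apply: h1; exact: ltnW hb
  | move=> b hb; apply: h2; exact: ltnW hb].
Qed.

Lemma divn_divn n d : 0 < n -> d %| n -> n %/ (n %/ d) = d.
Proof. by move=> n0 dn; rewrite divnA // mulKn. Qed.

Lemma count_gcd n d : 0 < n -> d %| n ->
  \sum_(0 <= k < n) (gcdn k n == d) = totient (n %/ d).
Proof.
move=> n0 dn; set e := n %/ d.
have d0 : 0 < d by case: d dn {e} => //; rewrite dvd0n => /eqP h; rewrite h in n0.
have ne : n = e * d by rewrite divnK.
have claim : forall m, \sum_(0 <= k < m * d) (gcdn k n == d) = \sum_(0 <= j < m) coprime e j.
  elim=> [|m IH]; first by rewrite !big_geq.
  rewrite big_nat_recr //= mulSn addnC (@big_cat_nat _ _ _ (m * d)) //=; last by lia.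
  rewrite IH; congr (_ + _).
  rewrite big_ltn; last by lia.
  have -> : \sum_((m * d).+1 <= i < m * d + d) (gcdn i n == d) = 0.
    rewrite big_nat_cond big1 // => i /andP[/andP[hi1 hi2] _].
    case: (gcdn i n =P d) => // hg; exfalso.
    have : d %| i by rewrite -hg dvdn_gcdl.
    have -> : i = m * d + (i - m * d) by lia.
    rewrite dvdn_addr ?dvdn_mull // => /dvdn_leq; lia.
  rewrite addn0 ne -muln_gcdl /coprime gcdnC.
  by rewrite -{2}(mul1n d) eqn_pmul2r.
by rewrite {1}ne claim totient_count_coprime.
Qed.


Lemma sum_gcd n (g : nat -> nat) : 0 < n ->
  \sum_(0 <= k < n) g (gcdn k n) =
  \sum_(m < n.+1 | m %| n) g (n %/ m) * totient m.
Proof.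
move=> n0.
transitivity (\sum_(m < n.+1 | m %| n) \sum_(0 <= k < n) (gcdn k n == n %/ m) * g (n %/ m)); last first.
  apply: eq_bigr => m mn; rewrite -big_distrl /= count_gcd ?divn_divn ?dvdn_div //.
  by rewrite mulnC.
rewrite exchange_big /=; apply: eq_bigr => k _.
have g0 : 0 < gcdn k n by rewrite gcdn_gt0 n0 orbT.
have gn : gcdn k n %| n by apply: dvdn_gcdr.
have hlt : n %/ gcdn k n < n.+1 by rewrite ltnS leq_div.
rewrite (bigD1 (Ordinal hlt)) /=; last by rewrite dvdn_div.
rewrite divn_divn // eqxx mul1n big1 ?addn0 // => m /andP[mn hm].
case: (gcdn k n =P n %/ m) => [hg|]; last by rewrite mul0n.
exfalso; move/eqP: hm; apply; apply: val_inj => /=.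
by rewrite hg divn_divn.
Qed.

Lemma sum_divisors N (F : nat -> nat) : 0 < N ->
  \sum_(x < N.+1 | x %| N) F x = \sum_(x <- divisors N) F x.
Proof.
move=> N0; rewrite -(big_mkord (fun x => x %| N)) -big_filter.
apply: perm_big; apply: uniq_perm.
- by rewrite filter_uniq // iota_uniq.
- exact: divisors_uniq.
move=> x; rewrite mem_filter mem_iota -dvdn_divisors // add0n ltnS.
by case h: (x %| N); rewrite //= dvdn_leq.
Qed.

Lemma div_decomp Q p J x : prime p -> 0 < Q -> ~~ (p %| Q) ->
  x %| Q * p ^ J -> exists2 a, a <= J & exists2 m, m %| Q & x = m * p ^ a.
Proof.
move=> pp Q0 npQ hx.
have x0 : 0 < x.
  by apply: dvdn_gt0 hx; rewrite muln_gt0 Q0 expn_gt0 prime_gt0.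
have [m cpm ex] := pfactor_coprime pp x0.
set k := logn p x in ex.
have cQ : coprime (p ^ k) Q by rewrite coprimeXl // prime_coprime.
have cm : coprime m (p ^ J) by rewrite coprimeXr // coprime_sym.
exists k.
  rewrite -(@dvdn_Pexp2l p) ?prime_gt1 //.
  rewrite -(@Gauss_dvdr _ Q) //; apply: dvdn_trans hx; rewrite ex.
  by rewrite dvdn_mull.
exists m => //.
rewrite -(@Gauss_dvdl _ _ (p ^ J)) //; apply: dvdn_trans hx; rewrite ex.
by rewrite dvdn_mulr.
Qed.

Lemma sum_div_split Q p J (f : nat -> nat) : prime p -> 0 < Q -> ~~ (p %| Q) ->
  \sum_(x < (Q * p ^ J).+1 | x %| Q * p ^ J) f x =
  \sum_(a < J.+1) \sum_(m < Q.+1 | m %| Q) f (m * p ^ a).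
Proof.
move=> pp Q0 npQ.
have p0 := prime_gt0 pp.
have N0 : 0 < Q * p ^ J by rewrite muln_gt0 Q0 expn_gt0 p0.
rewrite (@sum_divisors (Q * p ^ J) f N0).
transitivity (\sum_(a < J.+1) \sum_(m <- divisors Q) f (m * p ^ a)); last first.
  by apply: eq_bigr => a _; symmetry; apply: sum_divisors.
rewrite -(big_mkord xpredT (fun a => \sum_(m <- divisors Q) f (m * p ^ a))).
rewrite -(big_allpairs_dep (h := fun a m => m * p ^ a)).
apply: perm_big; apply: uniq_perm.
- exact: divisors_uniq.
- apply: (@allpairs_uniq _ _ _ (fun a m => m * p ^ a)); [exact: iota_uniq | exact: divisors_uniq |].
  move=> [a1 m1] [a2 m2] h1 h2 /= heq.
  case/allpairsP: h1 => [[b1 n1] /= [_ hm1 [eb1 en1]]]; subst.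
  case/allpairsP: h2 => [[b2 n2] /= [_ hm2 [eb2 en2]]]; subst.
  have c1 : coprime p n1.
    rewrite prime_coprime //; apply: contra npQ => h; apply: dvdn_trans h _.
    by rewrite dvdn_divisors.
  have c2 : coprime p n2.
    rewrite prime_coprime //; apply: contra npQ => h; apply: dvdn_trans h _.
    by rewrite dvdn_divisors.
  have ea : b1 = b2.
    have := congr1 (logn p) heq.
    by rewrite !logn_Gauss // !pfactorK.
  rewrite ea in heq *; congr (_, _).
  have pb : 0 < p ^ b2 by rewrite expn_gt0 p0.
  by apply/eqP; rewrite -(eqn_pmul2r pb) heq.
move=> x; rewrite -dvdn_divisors //; apply/idP/allpairsP.
  move=> /(@div_decomp Q p J x pp Q0 npQ) [a ha [m hm ->]].
  exists (a, m) => /=; split => //; first by rewrite mem_iota add0n ltnS.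
  by rewrite -dvdn_divisors.
move=> [[a m] /= [ha hm ->]]; rewrite mem_iota add0n ltnS in ha.
rewrite -dvdn_divisors // in hm.
by apply: dvdn_mul => //; apply: dvdn_exp2l.
Qed.


Lemma key (p J : nat -> nat) r :
  (forall i, i < r -> prime (p i) /\ \prod_(j < i) p j ^ J j < (p i).-1) ->
  forall c1 c2 : nat -> bool,
  \sum_(x < (\prod_(i < r) p i ^ J i).+1 | x %| \prod_(i < r) p i ^ J i) c1 x * totient x =
  \sum_(x < (\prod_(i < r) p i ^ J i).+1 | x %| \prod_(i < r) p i ^ J i) c2 x * totient x ->
  forall x, x %| \prod_(i < r) p i ^ J i -> c1 x = c2 x.
Proof.
elim: r => [|r IH] H c1 c2.
  rewrite big_ord0 => heq x; rewrite dvdn1 => /eqP ->.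
  move: heq; rewrite big_mkcond [in RHS]big_mkcond !big_ord_recr !big_ord0 /=.
  by case: (c1 1) (c2 1) => [] [].
rewrite big_ord_recr /=.
set Q := \prod_(i < r) p i ^ J i; set P := p r; set K := J r.
have [pP hQ] := H r (ltnSn r).
have H' : forall i, i < r -> prime (p i) /\ \prod_(j < i) p j ^ J j < (p i).-1.
  by move=> i hi; apply: H; apply: ltnW.
have Q0 : 0 < Q.
  by apply: prodn_gt0 => i; rewrite expn_gt0 prime_gt0 // (H' i (ltn_ord i)).1.
have npQ : ~~ (P %| Q).
  by apply/negP => /(dvdn_leq Q0) h; move: hQ; rewrite -/P; lia.
pose T (c : nat -> bool) a := \sum_(m < Q.+1 | m %| Q) c (m * P ^ a) * totient m.
have E : forall c : nat -> bool,
  \sum_(x < (Q * P ^ K).+1 | x %| Q * P ^ K) c x * totient x =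
  \sum_(a < K.+1) totient (P ^ a) * T c a.
  move=> c; rewrite (@sum_div_split Q P K (fun x => c x * totient x)) //.
  apply: eq_bigr => a _; rewrite /T big_distrr /=; apply: eq_bigr => m hm.
  rewrite totient_coprime; last first.
    rewrite coprime_sym coprimeXl // prime_coprime //.
    by apply: contra npQ => h; apply: dvdn_trans h hm.
  by rewrite mulnA [LHS]mulnC.
have TB : forall c a, T c a <= Q.
  move=> c a; rewrite /T; apply: (leq_trans _ (eq_leq (sum_totient_dvd Q))); apply: leq_sum => m _.
  by case: (c _); rewrite ?mul1n ?mul0n.
rewrite !E => heq.
have hT := @radix P Q K.+1 (T c1) (T c2) pP hQ (fun a _ => TB c1 a) (fun a _ => TB c2 a) heq.
move=> x /(@div_decomp Q P K x pP Q0 npQ) [a ha [m hm ->]].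
exact: (IH H' (fun m => c1 (m * P ^ a)) (fun m => c2 (m * P ^ a)) (hT a ha) m hm).
Qed.



Lemma modF1 n i k : i < n -> k < n -> ((k + i) %% n + n - i) %% n = k.
Proof.
move=> hi hk; case: (ltnP (k + i) n) => h.
  rewrite (modn_small h) (_ : k + i + n - i = k + n); last by lia.
  by rewrite modnDr modn_small.
have -> : (k + i) %% n = k + i - n.
  rewrite -{1}(subnK h) modnDr modn_small //; lia.
rewrite (_ : k + i - n + n - i = k); last by lia.
by rewrite modn_small.
Qed.

Lemma modF2 n j k : j < n -> k < n -> (j + n - (j + n - k) %% n) %% n = k.
Proof.
move=> hj hk; case: (ltnP (j + n - k) n) => h.
  rewrite (modn_small h) (_ : j + n - (j + n - k) = k); last by lia.
  by rewrite modn_small.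
have -> : (j + n - k) %% n = j + n - k - n.
  rewrite -{1}(subnK h) modnDr modn_small //; lia.
rewrite (_ : j + n - (j + n - k - n) = k + n); last by lia.
by rewrite modnDr modn_small.
Qed.

Definition cnt (n : nat) (D : {fset nat}) : nat := \sum_(k < n) (gcdn k n \in D).

Lemma sum_ind n (F : 'I_n -> bool) :
  (\sum_(k < n) (if F k then 1 else 0) : algC)%R = (\sum_(k < n) F k)%:R%R.
Proof. by rewrite natr_sum; apply: eq_bigr => k _; case: (F k). Qed.

Lemma rowsum n D (i : 'I_n) :
  (\sum_(j < n) ICG_adjmx n D i j = (cnt n D)%:R)%R.
Proof.
have n0 : 0 < n by case: n i => [[]|].
pose h (k : 'I_n) : 'I_n := Ordinal (ltn_pmod (k + i) n0).
have hinj : injective h.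
  move=> k k' /(congr1 (fun x : 'I_n => ((val x + n - i) %% n))) /=.
  by rewrite !modF1 // => e; apply: val_inj.
rewrite (reindex_inj hinj); rewrite -sum_ind; apply: eq_bigr => k _.
by rewrite mxE /ICG_adj /= modF1.
Qed.

Lemma colsum n D (j : 'I_n) :
  (\sum_(i < n) ICG_adjmx n D i j = (cnt n D)%:R)%R.
Proof.
have n0 : 0 < n by case: n j => [[]|].
pose h (k : 'I_n) : 'I_n := Ordinal (ltn_pmod (j + n - k) n0).
have hinj : injective h.
  move=> k k' /(congr1 (fun x : 'I_n => ((j + n - val x) %% n))) /=.
  by rewrite !modF2 // => e; apply: val_inj.
rewrite (reindex_inj hinj); rewrite -sum_ind; apply: eq_bigr => k _.
by rewrite mxE /ICG_adj /= modF2.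
Qed.

Lemma cnt_eigen n D : 0 < n -> eigenvalue (ICG_adjmx n D) (cnt n D)%:R%R.
Proof.
move=> n0; apply/eigenvalueP; exists (const_mx 1%R).
  apply/rowP => j; rewrite !mxE -(colsum n D j) mulr1.
  by apply: eq_bigr => i _; rewrite mxE mul1r.
apply/eqP => /rowP /(_ (Ordinal n0)); rewrite !mxE => /eqP; by rewrite oner_eq0.
Qed.

Lemma eigen_bound n D (a : algC) : eigenvalue (ICG_adjmx n D) a ->
  (`|a| <= (cnt n D)%:R)%R.
Proof.
case/eigenvalueP => v hv v0.
set A := ICG_adjmx n D.
have Apos : forall i j, (`|A i j| = A i j)%R.
  by move=> i j; rewrite /A mxE; case: ifP; rewrite ?normr1 ?normr0.
have Sge : forall j, (`|a| * `|v ord0 j| <= \sum_i `|v ord0 i| * A i j)%R.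
  move=> j; rewrite -normrM.
  have -> : (a * v ord0 j = \sum_i v ord0 i * A i j)%R.
    by have := congr1 (fun M : 'rV[algC]_n => M ord0 j) hv; rewrite !mxE => <-.
  apply: le_trans (ler_norm_sum _ _ _) _; apply: ler_sum => i _.
  by rewrite normrM Apos.
set S := (\sum_j `|v ord0 j|)%R.
have S0 : (0 < S)%R.
  rewrite lt_def (sumr_ge0 _ (fun j _ => normr_ge0 _)) andbT.
  apply/negP => /eqP hS; apply/negP: v0; apply/negPn/eqP/rowP => j.
  rewrite mxE; apply/eqP; rewrite -normr_eq0; apply/eqP.
  exact: (psumr_eq0P (fun j _ => normr_ge0 (v ord0 j)) hS).
rewrite -(ler_pM2r S0).
apply: (@le_trans _ _ (\sum_j \sum_i `|v ord0 i| * A i j)%R).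
  by rewrite /S big_distrr /=; apply: ler_sum => j _.
rewrite exchange_big /= /S big_distrr /=; apply: ler_sum => i _.
by rewrite -big_distrr /= rowsum mulrC.
Qed.

Lemma root_mup n (A : 'M[algC]_n) x :
  root (char_poly A) x = (0 < mup x (char_poly A)).
Proof.
by rewrite -XsubC_dvd ?dvdp_XsubCl // monic_neq0 // char_poly_monic.
Qed.

Lemma cnt_le n D1 D2 : 0 < n -> Spec (ICG_adjmx n D1) = Spec (ICG_adjmx n D2) ->
  cnt n D2 <= cnt n D1.
Proof.
move=> n0 hS.
have e2 := @cnt_eigen n D2 n0.
rewrite eigenvalue_root_char root_mup in e2.
have : eigenvalue (ICG_adjmx n D1) (cnt n D2)%:R%R.
  rewrite eigenvalue_root_char root_mup.
  by have := congr1 (fun f => f (cnt n D2)%:R%R) hS; rewrite /Spec /= => ->.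
by move/eigen_bound; rewrite normr_nat ler_nat.
Qed.


Lemma cnt_formula n D : 0 < n ->
  cnt n D = \sum_(m < n.+1 | m %| n) (n %/ m \in D) * totient m.
Proof.
move=> n0; rewrite /cnt -(big_mkord xpredT (fun k => nat_of_bool (gcdn k n \in D))).
exact: (@sum_gcd n (fun d => nat_of_bool (d \in D)) n0).
Qed.

Lemma odd_lt Q P : Q < P -> odd Q -> odd P -> Q < P.-1.
Proof.
move=> hl oQ oP; have P0 : 0 < P by lia.
have hne : Q <> P.-1.
  by move=> e; move: oP; rewrite -(prednK P0) /= -e oQ.
lia.
Qed.

End Helpers.

Theorem theorem1p4
  (n s : nat) (p J : nat -> nat)
  (D1 D2 : {fset nat}) :
  odd n ->
  2 <= s ->
  (forall i, i < s -> prime (p i)) ->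
  (forall i j, i < s -> j < s -> p i = p j -> i = j) ->
  (forall i, i < s -> 1 <= J i) ->
  n = \prod_(i < s) p i ^ J i ->
  (forall r, 1 <= r <= s - 1 -> \prod_(i < r) p i ^ J i < p r) ->
  (forall d, d \in D1 -> (d %| n) && (d != n)) ->
  (forall d, d \in D2 -> (d %| n) && (d != n)) ->
  Spec (ICG_adjmx n D1) = Spec (ICG_adjmx n D2) ->
  D1 = D2.
Proof.
move=> on s2 pr _ J1 en hg hD1 hD2 hS.
have n0 : (0 < n)%N by rewrite lt0n; apply/eqP => e; move: on; rewrite e.
have hc : cnt n D1 = cnt n D2.
  by apply/eqP; rewrite eqn_leq !cnt_le.
rewrite !cnt_formula // in hc.
have dn : forall i, (i <= s)%N -> (\prod_(j < i) p j ^ J j %| n)%N.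
  move=> i hi; rewrite en -!(big_mkord xpredT (fun j => p j ^ J j)).
  by rewrite (@big_cat_nat _ _ _ i 0 s) //=; apply: dvdn_mulr.
have pn : forall i, (i < s)%N -> (p i %| n)%N.
  move=> i hi; apply: (@dvdn_trans (p i ^ J i)); first by rewrite dvdn_exp ?J1.
  by rewrite en (bigD1 (Ordinal hi)) //=; exact: dvdn_mulr.
have H : forall i, (i < s)%N -> prime (p i) /\ (\prod_(j < i) p j ^ J j < (p i).-1)%N.
  move=> i hi; split; first exact: pr.
  have op := dvdn_odd (pn i hi) on.
  case: i hi op => [|i] hi op.
    rewrite big_ord0; have := prime_gt1 (pr 0%N hi).
    by case: (p 0%N) op => [|[|[|k]]].
  apply: odd_lt => //; last exact: dvdn_odd (dn _ (ltnW hi)) on.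
  apply: hg; apply/andP; split => //; lia.
have E := @key p J s H (fun m => n %/ m \in D1) (fun m => n %/ m \in D2).
rewrite -en in E; have {}E := E hc.
apply/fsetP => d.
case dd: (d %| n)%N.
  by have := E _ (dvdn_div dd); rewrite divn_divn.
case h1: (d \in D1); first by move: (hD1 d h1); rewrite dd.
case h2: (d \in D2) => //; by move: (hD2 d h2); rewrite dd.
Qed.
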